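(* Let $Q$ be a quantum circuit acting on $w$ qubits and let $k$ be a positive integer with $k\le w$. Let $R$ be the circuit on $w+1$ qubits, divided into a single-qubit register $\mathsf{O}$ (the first qubit), a $k$-qubit register $\mathsf{Q}$ (whose first qubit is denoted $\mathsf{Q}^{(1)}$) and a $(w-k)$-qubit register $\mathsf{R}$, that performs in order: (1) the $k$-controlled Hadamard $C^k(H)$ with controls $\mathsf{Q}$ and target $\mathsf{O}$, followed by $X$ on each qubit of $\mathsf{Q}$; (2) $Q$ on $(\mathsf{Q},\mathsf{R})$; (3) the controlled-$Z$ on $(\mathsf{O},\mathsf{Q}^{(1)})$; (4) $Q^\dagger$ on $(\mathsf{Q},\mathsf{R})$; (5) $X$ on each qubit of $\mathsf{Q}$, followed by $C^k(H)$ with controls $\mathsf{Q}$ and target $\mathsf{O}$; with $\mathsf{O}$ as output qubit. Then \[1-2^{-k}\bigl(1-(p_{\mathrm{acc}}(Q,k))^2\bigr)\le p_{\mathrm{acc}}(R,1)\le 1-2^{-k}\bigl(1-p_{\mathrm{acc}}(Q,k)\bigr).\]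
   Context: For a circuit $Q$ on $w$ qubits and $1\le k\le w$, $p_{\mathrm{acc}}(Q,k)=\mathrm{tr}\,\Pi_{\mathrm{acc}}Q\rho^{(w,k)}_{\mathrm{init}}Q^\dagger$, where $\rho^{(w,k)}_{\mathrm{init}}=(|0\rangle\langle0|)^{\otimes k}\otimes(I/2)^{\otimes(w-k)}$ and $\Pi_{\mathrm{acc}}=|0\rangle\langle0|\otimes I^{\otimes(w-1)}$; i.e., the first $k$ qubits start clean, the rest maximally mixed, and acceptance means the first qubit is measured as $0$. In $R$, the ordering of qubits is $\mathsf{O},\mathsf{Q},\mathsf{R}$, and $Q$ acting on $(\mathsf{Q},\mathsf{R})$ uses the qubits of $\mathsf{Q}$ as its first $k$ qubits. $C^k(H)$ applies the Hadamard gate to the target iff all $k$ control qubits are $1$; $X$ is the NOT gate and controlled-$Z$ multiplies the phase by $-1$ iff both qubits are $1$. *)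

(* Defs.v *)
(* Quantum circuits are modelled by their unitary operators,
   written as matrices indexed by computational-basis labels (bit strings). *)
From HB Require Import structures.
From mathcomp Require Import all_boot all_order all_algebra.
From mathcomp Require Import complex.
From mathcomp Require Import reals.
Set Implicit Arguments. Unset Strict Implicit. Unset Printing Implicit Defensive.
Import Order.TTheory GRing.Theory Num.Theory.
Local Open Scope ring_scope.

Section Ops.
Variable C : numClosedFieldType.

(* computational-basis labels of n qubits; qubit i (0-based) has value x i *)
Definition bits (n : nat) := {ffun 'I_n -> bool}.

(* linear operators on n qubits, as matrices indexed by basis labels:
   op x y = <x| A |y> *)
Definition op (n : nat) := bits n -> bits n -> C.

Definition opmul n (A B : op n) : op n :=
  fun x y => \sum_(z : bits n) A x z * B z y.
Definition opid n : op n := fun x y => (x == y)%:R.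
Arguments opid : clear implicits.
Definition adj n (A : op n) : op n := fun x y => (A y x)^*.
Definition optr n (A : op n) : C := \sum_(x : bits n) A x x.
Definition unitary n (U : op n) : Prop :=
  opmul U (adj U) = opid n /\ opmul (adj U) U = opid n.

(* rho_init^(n,k): first k qubits in |0>, the remaining n-k maximally mixed *)
Definition rho_init n k : op n := fun x y =>
  (x == y)%:R *
  (if [forall i : 'I_n, (val i < k)%N ==> ~~ x i]
   then (2 ^+ (n - k))^-1 else 0).
Arguments rho_init : clear implicits.

(* Pi_acc = |0><0| on the first qubit, identity elsewhere *)
Definition Pi_acc n : op n := fun x y =>
  (x == y)%:R * ([forall i : 'I_n, (val i == 0)%N ==> ~~ x i])%:R.
Arguments Pi_acc : clear implicits.

Definition p_acc n (U : op n) (k : nat) : C :=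
  optr (opmul (Pi_acc n) (opmul U (opmul (rho_init n k) (adj U)))).

(* ---- gates on w+1 qubits: qubit 0 = O, qubits 1..k = Q, k+1..w = R ---- *)

Definition btail w (x : bits w.+1) : bits w := [ffun i => x (lift ord0 i)].

Definition on_QR w (U : op w) : op w.+1 := fun x y =>
  (x ord0 == y ord0)%:R * U (btail x) (btail y).

Definition hadamard (b c : bool) : C :=
  (if b && c then -1 else 1) / sqrtC 2.

Definition flip n (j : 'I_n) (x : bits n) : bits n :=
  [ffun i => if i == j then ~~ x i else x i].
Definition Xgate n (j : 'I_n) : op n := fun x y => (x == flip j y)%:R.

Definition X_Q w (k : nat) : op w.+1 :=
  foldr (fun j A => opmul (Xgate (inord j : 'I_w.+1)) A) (opid w.+1)
        (iota 1 k).
Arguments X_Q : clear implicits.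

Definition CkH w (k : nat) : op w.+1 := fun x y =>
  if [forall i : 'I_w.+1, ((0 < val i) && (val i <= k))%N ==> x i]
  then ([forall i : 'I_w.+1, (val i != 0)%N ==> (x i == y i)])%:R
         * hadamard (x ord0) (y ord0)
  else (x == y)%:R.
Arguments CkH : clear implicits.

Definition CZ_OQ1 w : op w.+1 := fun x y =>
  (x == y)%:R * (if x ord0 && x (inord 1) then -1 else 1).
Arguments CZ_OQ1 : clear implicits.

(* The circuit R (as an operator: later gates multiply on the left). *)
Definition circuitR w k (Q : op w) : op w.+1 :=
  let step1 := opmul (X_Q w k) (CkH w k) in
  let step2 := on_QR Q in
  let step3 := CZ_OQ1 w in
  let step4 := on_QR (adj Q) in
  let step5 := opmul (CkH w k) (X_Q w k) in
  opmul step5 (opmul step4 (opmul step3 (opmul step2 step1))).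

End Ops.

(* Main.v *)
Require Import Defs.
From HB Require Import structures.
From mathcomp Require Import all_boot all_order all_algebra.
From mathcomp Require Import complex.
From mathcomp Require Import reals.
Import Order.TTheory GRing.Theory Num.Theory.
Local Open Scope ring_scope.
From mathcomp Require Import ring.
From Stdlib Require Import FunctionalExtensionality.
Set Implicit Arguments. Unset Strict Implicit. Unset Printing Implicit Defensive.

Section Gen.
Variable C : numClosedFieldType.

Lemma opmulA n (A B D : op C n) :
  opmul (opmul A B) D = opmul A (opmul B D).
Proof.
apply: functional_extensionality => x; apply: functional_extensionality => y; rewrite /opmul.
under eq_bigr do rewrite mulr_suml.
rewrite exchange_big /=; apply: eq_bigr => u _.
rewrite mulr_sumr; apply: eq_bigr => z _; by rewrite mulrA.
Qed.

Lemma sum_delta (T : finType) (a : T) (f : T -> C) :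
  \sum_(z : T) (z == a)%:R * f z = f a.
Proof.
rewrite (bigD1 a) //= eqxx mul1r big1 ?addr0 // => z /negbTE ->.
by rewrite mul0r.
Qed.

Lemma sum_delta' (T : finType) (a : T) (f : T -> C) :
  \sum_(z : T) (a == z)%:R * f z = f a.
Proof. by under eq_bigr do rewrite eq_sym; rewrite sum_delta. Qed.

Lemma opmul_diag n (D A : op C n) (f : bits n -> C) :
  (forall x y, D x y = (x == y)%:R * f x) ->
  forall x y, opmul D A x y = f x * A x y.
Proof.
move=> HD x y; rewrite /opmul.
under eq_bigr do rewrite HD -mulrA.
by rewrite sum_delta'.
Qed.

Lemma opmul_perm n (P A : op C n) (g : bits n -> bits n) :
  (forall x y, P x y = (x == g y)%:R) -> involutive g ->
  forall x y, opmul P A x y = A (g x) y.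
Proof.
move=> HP gK x y; rewrite /opmul.
under eq_bigr => z _ do rewrite HP eq_sym (can2_eq gK gK).
by rewrite sum_delta.
Qed.

Lemma p_accE n (U : op C n) k :
  p_acc U k = \sum_(x : bits n) ([forall i : 'I_n, (val i == 0)%N ==> ~~ x i])%:R *
     \sum_(z : bits n) ((if [forall i : 'I_n, (val i < k)%N ==> ~~ z i]
                          then (2 ^+ (n - k))^-1 else 0) * `|U x z| ^+ 2).
Proof.
rewrite /p_acc /optr; apply: eq_bigr => x _.
rewrite (opmul_diag _ (f := fun x => ([forall i : 'I_n, (val i == 0)%N ==> ~~ x i])%:R)) //.
congr (_ * _); rewrite {1}/opmul; apply: eq_bigr => z _.
rewrite (opmul_diag _ (f := fun z => if [forall i : 'I_n, (val i < k)%N ==> ~~ z i]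
                          then (2 ^+ (n - k))^-1 else 0)) //.
by rewrite /adj normCK mulrCA.
Qed.

End Gen.

Definition bcons w (b : bool) (t : bits w) : bits w.+1 :=
  [ffun i => if unlift ord0 i is Some j then t j else b].

Lemma bcons0 w b (t : bits w) : bcons b t ord0 = b.
Proof. by rewrite ffunE unlift_none. Qed.

Lemma bcons_lift w b (t : bits w) j : bcons b t (lift ord0 j) = t j.
Proof. by rewrite ffunE liftK. Qed.

Lemma btail_bcons w b (t : bits w) : btail (bcons b t) = t.
Proof. by apply/ffunP => j; rewrite ffunE bcons_lift. Qed.

Lemma bconsE w (x : bits w.+1) : bcons (x ord0) (btail x) = x.
Proof.
apply/ffunP => i; case: (unliftP ord0 i) => [j ->|->].
  by rewrite bcons_lift ffunE.
by rewrite bcons0.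
Qed.

Lemma bcons_eq w b b' (t t' : bits w) :
  (bcons b t == bcons b' t') = (b == b') && (t == t').
Proof.
apply/eqP/andP => [E|[/eqP-> /eqP->]] //; split; apply/eqP.
  by rewrite -(bcons0 b t) -(bcons0 b' t') E.
by rewrite -(btail_bcons b t) -(btail_bcons b' t') E.
Qed.

Section Sums.
Variable C : numClosedFieldType.

Lemma sum_split w (F : bits w.+1 -> C) :
  \sum_(x : bits w.+1) F x = \sum_(b : bool) \sum_(t : bits w) F (bcons b t).
Proof.
rewrite pair_big /=.
rewrite (reindex (fun p : bool * bits w => bcons p.1 p.2)) //=.
exists (fun x : bits w.+1 => (x ord0, btail x)) => [[b t] _|x _] /=.
  by rewrite bcons0 btail_bcons.
by rewrite bconsE.
Qed.

End Sums.

Lemma forall_bcons_ctrl w k b (t : bits w) :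
  [forall i : 'I_w.+1, ((0 < val i) && (val i <= k))%N ==> bcons b t i] =
  [forall j : 'I_w, (val j < k)%N ==> t j].
Proof.
apply/forallP/forallP => H j.
  by have := H (lift ord0 j); rewrite bcons_lift; apply; rewrite lift0 /=.
case: (unliftP ord0 j) => [j' ->|->] //.
by rewrite bcons_lift /= /bump /= add1n; exact: H.
Qed.

Lemma forall_bcons_tail w b b' (t t' : bits w) :
  [forall i : 'I_w.+1, (val i != 0)%N ==> (bcons b t i == bcons b' t' i)] =
  (t == t').
Proof.
apply/forallP/eqP => [H|->] .
  by apply/ffunP => j; have := H (lift ord0 j); rewrite !bcons_lift /= /bump /= => /eqP.
move=> j; case: (unliftP ord0 j) => [j' ->|->] //.
by rewrite !bcons_lift eqxx implybT.
Qed.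

Lemma forall_bcons_init w k b (t : bits w) :
  [forall i : 'I_w.+1, (val i < k.+1)%N ==> ~~ bcons b t i] =
  ~~ b && [forall j : 'I_w, (val j < k)%N ==> ~~ t j].
Proof.
apply/forallP/andP => [H|[Hb /forallP H] j].
  split; first by have := H ord0; rewrite bcons0.
  by apply/forallP => j; have := H (lift ord0 j); rewrite bcons_lift /= /bump /=; apply.
case: (unliftP ord0 j) => [j' ->|->]; last by rewrite bcons0.
by rewrite bcons_lift /= /bump /=; exact: H.
Qed.

Lemma forall_bcons_init0 w b (t : bits w) :
  [forall i : 'I_w.+1, (val i < 0)%N ==> ~~ bcons b t i].
Proof. by apply/forallP. Qed.

Definition tauk w k (t : bits w) : bits w :=
  [ffun i => if (val i < k)%N then ~~ t i else t i].
Definition flQ w k (x : bits w.+1) : bits w.+1 :=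
  bcons (x ord0) (tauk k (btail x)).
Definition aa w k (t : bits w) := [forall j : 'I_w, (val j < k)%N ==> t j].
Definition zz w k (t : bits w) := [forall j : 'I_w, (val j < k)%N ==> ~~ t j].

Lemma taukK w k : involutive (@tauk w k).
Proof. by move=> t; apply/ffunP => i; rewrite !ffunE; case: (val i < k)%N; rewrite ?negbK. Qed.

Lemma flQK w k : involutive (@flQ w k).
Proof. by move=> x; rewrite /flQ bcons0 btail_bcons taukK bconsE. Qed.

Lemma flQ_bcons w k b t : @flQ w k (bcons b t) = bcons b (tauk k t).
Proof. by rewrite /flQ bcons0 btail_bcons. Qed.

Lemma aa_tauk w k (t : bits w) : aa k (tauk k t) = zz k t.
Proof.
apply: eq_forallb => j; rewrite ffunE; case: ifP => //.
Qed.

Lemma flipK n (j : 'I_n) : involutive (flip j).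
Proof. by move=> x; apply/ffunP => i; rewrite !ffunE; case: eqP => // _; rewrite negbK. Qed.

Definition gl n (l : seq nat) (y : bits n) : bits n :=
  [ffun i => y i (+) odd (count_mem (val i) l)].

Section XQ.
Variable C : numClosedFieldType.

Lemma foldr_X w (l : seq nat) : all (fun j => j <= w)%N l ->
  forall x y,
  foldr (fun j A => opmul (@Xgate C w.+1 (inord j)) A) (@opid C w.+1) l x y
  = (x == gl l y)%:R.
Proof.
elim: l => [_|j l IH /andP[Hj Hl]] x y /=.
  rewrite /opid; congr (_ %:R); congr (x == _).
  by apply/ffunP => i; rewrite ffunE addbF.
rewrite (@opmul_perm C w.+1 _ _ (flip (inord j))) //; last by apply: flipK.
rewrite IH // (can2_eq (flipK _) (flipK _)); congr ((x == _)%:R).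
apply/ffunP => i; rewrite !ffunE /=.
have -> : (i == inord j) = (j == val i).
  by rewrite -val_eqE /= inordK ?ltnS // eq_sym.
by case: (j == val i); rewrite /= ?addbN ?add0n.
Qed.

Lemma X_QE w k (x y : bits w.+1) : (k <= w)%N ->
  @X_Q C w k x y = (x == flQ k y)%:R.
Proof.
move=> kw; rewrite /X_Q foldr_X; last first.
  by apply/allP => j; rewrite mem_iota add1n ltnS => /andP[_ /leq_trans]; apply.
congr ((x == _)%:R); apply/ffunP => i.
rewrite ffunE count_uniq_mem ?iota_uniq // mem_iota add1n ltnS.
rewrite -{1}(bconsE y) /flQ.
case: (unliftP ord0 i) => [j ->|->]; last by rewrite !bcons0 /= addbF.
rewrite !bcons_lift !ffunE /= /bump /= add1n.
by case: (j < k)%N; rewrite /= ?addbT ?addbF.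
Qed.

Lemma CkH_bcons w k b b' (s s' : bits w) :
  @CkH C w k (bcons b s) (bcons b' s') =
  if aa k s then (s == s')%:R * hadamard C b b' else ((b == b') && (s == s'))%:R.
Proof.
rewrite /CkH forall_bcons_ctrl forall_bcons_tail !bcons0 bcons_eq //.
Qed.

Lemma opmul_CkH w k (A : op C w.+1) b s y :
  opmul (@CkH C w k) A (bcons b s) y =
  if aa k s then \sum_(b' : bool) hadamard C b b' * A (bcons b' s) y
  else A (bcons b s) y.
Proof.
rewrite /opmul sum_split.
under eq_bigr => b' _ do under eq_bigr => t _ do rewrite CkH_bcons.
case: ifP => _.
  apply: eq_bigr => b' _.
  under eq_bigr => t _ do rewrite -mulrA.
  by rewrite sum_delta'.
under eq_bigr => b' _ do under eq_bigr => t _ do rewrite -mulnb natrM -mulrA.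
under eq_bigr => b' _ do rewrite -mulr_sumr sum_delta'.
by rewrite sum_delta'.
Qed.

Lemma opmul_onQR w (U : op C w) (A : op C w.+1) b s y :
  opmul (on_QR U) A (bcons b s) y = \sum_(r : bits w) U s r * A (bcons b r) y.
Proof.
rewrite /opmul sum_split.
under eq_bigr => b' _ do under eq_bigr => t _ do
  rewrite /on_QR !bcons0 !btail_bcons -mulrA.
under eq_bigr => b' _ do rewrite -mulr_sumr.
by rewrite sum_delta'.
Qed.

Lemma bcons_inord1 w b (t : bits w.+1) : bcons b t (inord 1) = t ord0.
Proof.
have -> : (inord 1 : 'I_w.+2) = lift ord0 ord0 by apply: val_inj; rewrite /= inordK.
by rewrite bcons_lift.
Qed.

Lemma opmul_CZ w (A : op C w.+2) b s y :
  opmul (@CZ_OQ1 C w.+1) A (bcons b s) y =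
  (if b && s ord0 then -1 else 1) * A (bcons b s) y.
Proof.
rewrite (@opmul_diag C w.+2 _ _ (fun x : bits w.+2 => if x ord0 && x (inord 1) then -1 else 1)) //.
by rewrite bcons0 bcons_inord1.
Qed.

End XQ.

Section Main.
Variable C : numClosedFieldType.
Variables (w k : nat) (Q : op C w.+1).
Hypothesis kw : (k <= w.+1)%N.
Hypothesis UQ : unitary Q.

Definition G (u v : bits w.+1) : C :=
  \sum_(r : bits w.+1) (~~ r ord0)%:R * ((Q r u)^* * Q r v).

Lemma opmul_X (A : op C w.+2) x y :
  opmul (@X_Q C w.+1 k) A x y = A (flQ k x) y.
Proof. by apply: opmul_perm => [x' y'|]; [apply: X_QE | apply: flQK]. Qed.

Lemma unitQ u v : \sum_(r : bits w.+1) (Q r u)^* * Q r v = (u == v)%:R.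
Proof.
have := congr1 (fun f => f u v) UQ.2; rewrite /opmul /adj /opid /= => <-.
done.
Qed.

Definition cc (t : bits w.+1) (b : bool) : C :=
  if aa k t then hadamard C b false else (b == false)%:R.

Lemma stepY t r b :
  \sum_(r' : bits w.+1) Q r r' *
     opmul (@X_Q C w.+1 k) (@CkH C w.+1 k) (bcons b r') (bcons false t)
  = Q r (tauk k t) * cc t b.
Proof.
have E : forall r', opmul (@X_Q C w.+1 k) (@CkH C w.+1 k) (bcons b r') (bcons false t)
   = (r' == tauk k t)%:R * cc t b.
  move=> r'; rewrite opmul_X flQ_bcons CkH_bcons /cc.
  case: (eqVneq r' (tauk k t)) => [->|ne]; first by rewrite taukK eqxx andbT mul1r; case: ifP => _; rewrite ?mulr1 ?mul1r.
  have -> : (tauk k r' == t) = false.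
    by apply/negbTE; apply: contra ne => /eqP <-; rewrite taukK.
  by rewrite andbF !mul0r; case: ifP.
under eq_bigr do rewrite E mulrCA.
by rewrite sum_delta mulrC.
Qed.

Lemma stepW t u b :
  opmul (on_QR (adj Q)) (opmul (@CZ_OQ1 C w.+1)
     (opmul (on_QR Q) (opmul (@X_Q C w.+1 k) (@CkH C w.+1 k)))) (bcons b u) (bcons false t)
  = cc t b * (if b then 2 * G u (tauk k t) - (u == tauk k t)%:R
              else (u == tauk k t)%:R).
Proof.
rewrite opmul_onQR.
under eq_bigr do rewrite opmul_CZ opmul_onQR stepY.
case: b => /=.
  rewrite /G -(unitQ u (tauk k t)) mulr_sumr -sumrB mulr_sumr.
  apply: eq_bigr => r _; rewrite /adj.
  by case: (r ord0) => /=; rewrite ?mul0r ?mul1r; ring.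
rewrite -unitQ mulr_sumr; apply: eq_bigr => r _; rewrite /adj; ring.
Qed.


Lemma hadF b : hadamard C false b = (sqrtC 2)^-1.
Proof. by rewrite /hadamard /= mul1r. Qed.
Lemma hadTF : hadamard C true false = (sqrtC 2)^-1.
Proof. by rewrite /hadamard /= mul1r. Qed.
Lemma hh : (sqrtC 2)^-1 * (sqrtC 2)^-1 = 2^-1 :> C.
Proof. by rewrite -invfM -expr2 sqrtCK. Qed.

Lemma circE s t :
  circuitR k Q (bcons false s) (bcons false t) =
  if aa k t then (aa k s)%:R * G (tauk k s) (tauk k t) else (s == t)%:R.
Proof.
rewrite /circuitR opmulA opmul_CkH.
rewrite !opmul_X !flQ_bcons !stepW big_bool /= !opmul_X !flQ_bcons !stepW /=.
rewrite (inj_eq (can_inj (@taukK _ k))) /cc !hadF hadTF.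
case As: (aa k s); case At: (aa k t) => /=.
- rewrite mul1r !mulrA hh -mulrDr subrK mulrA mulVf ?mul1r //.
  by rewrite pnatr_eq0.
- have ne : s != t by apply: contraFN At => /eqP <-.
  rewrite (negbTE ne).
  have f0 : false%:R = 0 :> C by [].
  by rewrite f0 !mulr0 !mul0r addr0 mulr0.
- have ne : s != t by apply: contraFN As => /eqP ->.
  rewrite (negbTE ne).
  by rewrite (_ : false%:R = 0 :> C) // mulr0 mul0r.
- by rewrite mul1r.
Qed.

End Main.

Section Count.
Variable C : numClosedFieldType.

Lemma sum_one n : \sum_(t : bits n) (1 : C) = 2 ^+ n.
Proof. by rewrite sumr_const /bits card_ffun card_bool card_ord -natrX. Qed.

Lemma count_zz n k : \sum_(t : bits n) ((zz k t)%:R : C) = 2 ^+ (n - k).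
Proof.
elim: n k => [|n IH] k.
  rewrite -(sum_one 0); apply: eq_bigr => t _.
  by rewrite (_ : zz k t = true) //; apply/forallP => -[].
case: k => [|k].
  rewrite -(sum_one n.+1); apply: eq_bigr => t _.
  by rewrite (_ : zz 0 t = true) //; apply/forallP.
rewrite sum_split big_bool /= subSS -IH.
under eq_bigr do rewrite /zz forall_bcons_init /=.
rewrite big1 ?add0r //.
by apply: eq_bigr => t _; rewrite /zz forall_bcons_init.
Qed.

Lemma pi_bcons w b (t : bits w) :
  [forall i : 'I_w.+1, (val i == 0)%N ==> ~~ bcons b t i] = ~~ b.
Proof.
apply/forallP/idP => [H|Hb i].
  by have := H ord0; rewrite bcons0.
case: (unliftP ord0 i) => [j ->|->] //; by rewrite bcons0.
Qed.

Lemma pi_ord0 w (x : bits w.+1) :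
  [forall i : 'I_w.+1, (val i == 0)%N ==> ~~ x i] = ~~ x ord0.
Proof. by rewrite -{1}(bconsE x) pi_bcons. Qed.

End Count.

Section P.
Variable C : numClosedFieldType.
Variables (w k : nat) (Q : op C w.+1).
Hypothesis kw : (k <= w.+1)%N.
Hypothesis UQ : unitary Q.

Lemma pQ : p_acc Q k =
  (2 ^+ (w.+1 - k))^-1 * \sum_(t : bits w.+1) (zz k t)%:R * G Q t t.
Proof.
rewrite p_accE.
under eq_bigr => x _ do rewrite pi_ord0.
rewrite /G mulr_sumr.
under [RHS]eq_bigr => t _ do rewrite mulr_sumr mulr_sumr.
rewrite exchange_big /=.
apply: eq_bigr => x _; rewrite mulr_sumr; apply: eq_bigr => z _.
rewrite normCKC -/(zz k z).
case: (zz k z); [rewrite (_ : true%:R = 1 :> C) // | rewrite (_ : false%:R = 0 :> C) //]; ring.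
Qed.


Lemma b2 (b : bool) : (b%:R : C) ^+ 2 = b%:R.
Proof. by case: b; [rewrite (_ : true%:R = 1 :> C) // expr1n | rewrite (_ : false%:R = 0 :> C) // expr2 mul0r]. Qed.

Lemma sum_init1 n c (F : bits n.+1 -> C) :
  \sum_(z : bits n.+1) (if [forall i : 'I_n.+1, (val i < 1)%N ==> ~~ z i] then c else 0) * F z
  = c * \sum_(t : bits n) F (bcons false t).
Proof.
rewrite sum_split big_bool /= big1 ?add0r; last first.
  by move=> t _; rewrite (forall_bcons_init 0) /= mul0r.
rewrite mulr_sumr; apply: eq_bigr => t _.
by rewrite (forall_bcons_init 0) /= (_ : [forall j : 'I_n, (val j < 0)%N ==> ~~ t j] = true) //;
  apply/forallP.
Qed.

Lemma pR : p_acc (circuitR k Q) 1 =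
  (2 ^+ w.+1)^-1 * (2 ^+ w.+1 + (\sum_(t : bits w.+1) (zz k t)%:R *
      (\sum_(s : bits w.+1) (zz k s)%:R * `|G Q s t| ^+ 2) - 2 ^+ (w.+1 - k))).
Proof.
rewrite p_accE sum_split big_bool big1 ?add0r; last first.
  by move=> t _; rewrite pi_bcons (_ : (~~ true)%:R = 0 :> C) // mul0r.
under eq_bigr => s _ do rewrite pi_bcons (_ : (~~ false)%:R = 1 :> C) // mul1r
  sum_init1.
rewrite /= add0r (_ : (w.+2 - 1 = w.+1)%N) // -mulr_sumr; congr (_ * _).
rewrite exchange_big /=.
under eq_bigr => t _ do under eq_bigr => s _ do rewrite circE //.
have E : forall t : bits w.+1, \sum_(s : bits w.+1)
     `|if aa k t then (aa k s)%:R * G Q (tauk k s) (tauk k t) else (s == t)%:R| ^+ 2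
   = 1 + (aa k t)%:R * (\sum_(s : bits w.+1) (aa k s)%:R *
            `|G Q (tauk k s) (tauk k t)| ^+ 2 - 1).
  move=> t; case: (aa k t).
    rewrite (_ : true%:R = 1 :> C) // mul1r addrC subrK; apply: eq_bigr => s _.
    by rewrite normrM normr_nat exprMn b2.
  rewrite (_ : false%:R = 0 :> C) // mul0r addr0.
  under eq_bigr do rewrite normr_nat b2 eq_sym.
  by rewrite -[RHS](sum_delta' t (fun=> 1)); apply: eq_bigr => s _; rewrite mulr1.
under eq_bigr do rewrite E.
rewrite big_split /= sum_one; congr (_ + _).
have E2 : forall t', \sum_(s : bits w.+1) (aa k s)%:R * `|G Q (tauk k s) t'| ^+ 2
   = \sum_(s : bits w.+1) (zz k s)%:R * `|G Q s t'| ^+ 2.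
  move=> t'; rewrite (reindex_inj (can_inj (@taukK _ k))) /=.
  by apply: eq_bigr => s _; rewrite aa_tauk taukK.
rewrite (reindex_inj (can_inj (@taukK _ k))) /=.
under eq_bigr do rewrite aa_tauk taukK E2 mulrBr mulr1.
by rewrite sumrB count_zz.
Qed.


End P.

Section Ineq.
Variable C : numClosedFieldType.
Variables (w k : nat) (Q : op C w.+1).
Hypothesis UQ : unitary Q.

Lemma unitQ' r r' : \sum_(s : bits w.+1) Q r s * (Q r' s)^* = (r == r')%:R.
Proof.
have := congr1 (fun f => f r r') UQ.1; rewrite /opmul /adj /opid /= => <-.
done.
Qed.

Lemma G_conj s t : (G Q s t)^* = G Q t s.
Proof.
rewrite /G rmorph_sum; apply: eq_bigr => r _.
by rewrite !rmorphM /= rmorph_nat conjCK [Q r s * _]mulrC.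
Qed.

Lemma b2' (b : bool) : (b%:R : C) * b%:R = b%:R.
Proof. by case: b; [rewrite (_ : true%:R = 1 :> C) // mul1r | rewrite (_ : false%:R = 0 :> C) // mul0r]. Qed.

Lemma G_proj t : \sum_(s : bits w.+1) `|G Q s t| ^+ 2 = G Q t t.
Proof.
under eq_bigr do rewrite normCK G_conj.
rewrite /G.
under eq_bigr do rewrite mulr_suml.
rewrite exchange_big /=; apply: eq_bigr => r _.
under eq_bigr do rewrite mulr_sumr.
rewrite exchange_big /=.
have Ex : forall r' s : bits w.+1,
  (~~ r ord0)%:R * ((Q r s)^* * Q r t) * ((~~ r' ord0)%:R * ((Q r' t)^* * Q r' s))
  = ((~~ r ord0)%:R * Q r t * ((~~ r' ord0)%:R * (Q r' t)^*)) * (Q r' s * (Q r s)^*).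
  by move=> r' s; ring.
under eq_bigr do under eq_bigr do rewrite Ex.
under eq_bigr do rewrite -mulr_sumr unitQ' mulrC.
rewrite sum_delta.
set b := (~~ r ord0)%:R.
have bb : b * b = b by rewrite /b b2'.
rewrite -[in RHS]bb; clearbody b; ring.
Qed.

Lemma G_ge0 t : 0 <= G Q t t.
Proof.
apply: sumr_ge0 => r _; rewrite -normCKC; apply: mulr_ge0; first exact: ler0n.
by apply: exprn_ge0.
Qed.

Lemma sumzz_le t :
  \sum_(s : bits w.+1) (zz k s)%:R * `|G Q s t| ^+ 2 <= G Q t t.
Proof.
rewrite -G_proj; apply: ler_sum => s _.
case: (zz k s); [by rewrite (_ : true%:R = 1 :> C) // mul1r |].
by rewrite (_ : false%:R = 0 :> C) // mul0r; apply: exprn_ge0.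
Qed.

Lemma sumzz_ge t : zz k t ->
  G Q t t ^+ 2 <= \sum_(s : bits w.+1) (zz k s)%:R * `|G Q s t| ^+ 2.
Proof.
move=> zt; rewrite (bigD1 t) //= zt (_ : true%:R = 1 :> C) // mul1r.
rewrite ger0_norm ?G_ge0 // lerDl; apply: sumr_ge0 => s _.
by apply: mulr_ge0; [exact: ler0n | apply: exprn_ge0].
Qed.

End Ineq.

Lemma cauchy (C : numClosedFieldType) (T : finType) (z : T -> bool) (g : T -> C) :
  (forall t, g t \is Num.real) ->
  (0 : C) < \sum_t (z t)%:R ->
  (\sum_t (z t)%:R * g t) ^+ 2 <= (\sum_t ((z t)%:R : C)) * \sum_t (z t)%:R * g t ^+ 2.
Proof.
move=> gr Npos.
set N := \sum_t (z t)%:R; set S := \sum_t (z t)%:R * g t.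
have N0 : N != 0 by rewrite gt_eqF.
set m := S / N.
have mr : m \is Num.real.
  by rewrite rpredM ?rpredV ?rpred_sum // => t _; rewrite ?rpredM ?realn.
have H : 0 <= \sum_t (z t)%:R * (g t - m) ^+ 2.
  apply: sumr_ge0 => t _; apply: mulr_ge0; first exact: ler0n.
  by rewrite -real_normK ?rpredB //; apply: exprn_ge0.
have E : \sum_t (z t)%:R * (g t - m) ^+ 2 = \sum_t (z t)%:R * g t ^+ 2 - S ^+ 2 / N.
  have Et : forall t, (z t)%:R * (g t - m) ^+ 2 =
     (z t)%:R * g t ^+ 2 - (2 * m) * ((z t)%:R * g t) + m ^+ 2 * (z t)%:R.
    by move=> t; ring.
  under eq_bigr do rewrite Et.
  rewrite big_split /= sumrB -!mulr_sumr -/N -/S /m.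
  by field.
rewrite E subr_ge0 in H.
have -> : S ^+ 2 = N * (S ^+ 2 / N) by field.
by rewrite ler_wpM2l // ltW.
Qed.

Unset Implicit Arguments. Set Strict Implicit. Set Printing Implicit Defensive.

Theorem proposition11 (R : realType) (w k : nat) (Q : op (complex R) w) :
  (0 < k)%N -> (k <= w)%N -> unitary Q ->
  1 - (2 ^+ k)^-1 * (1 - (p_acc Q k) ^+ 2) <= p_acc (circuitR k Q) 1 /\
  p_acc (circuitR k Q) 1 <= 1 - (2 ^+ k)^-1 * (1 - p_acc Q k).
Proof.
case: w Q => [|w] Q k0 kw UQ; first by move: (leq_trans k0 kw).
rewrite (pR kw UQ) pQ.
set N := (2 : complex R) ^+ (w.+1 - k).
set P := \sum_(t : bits w.+1) (zz k t)%:R * G Q t t.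
set A := \sum_(t : bits w.+1) (zz k t)%:R * \sum_(s : bits w.+1) (zz k s)%:R * `|G Q s t| ^+ 2.
have De : (2 : complex R) ^+ w.+1 = 2 ^+ k * N by rewrite /N -exprD subnKC.
have N0 : 0 < N by rewrite exprn_gt0 // ltr0n.
have K0 : (0 : complex R) < 2 ^+ k by rewrite exprn_gt0 // ltr0n.
have AP : A <= P.
  apply: ler_sum => t _; case: (zz k t).
    by rewrite (_ : true%:R = 1 :> complex R) // !mul1r (sumzz_le k UQ).
  by rewrite (_ : false%:R = 0 :> complex R) // !mul0r.
have PA : P ^+ 2 / N <= A.
  have Hc := @cauchy _ _ (zz k) (fun t => G Q t t) (fun t => ger0_real (G_ge0 Q t)).
  rewrite count_zz -/N -/P in Hc; have {Hc} Hc := Hc N0.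
  rewrite ler_pdivrMr //; apply: (le_trans Hc); rewrite [A * N]mulrC; apply: ler_wpM2l; first exact: ltW.
  apply: ler_sum => t _; case Zt: (zz k t).
    by rewrite (_ : true%:R = 1 :> complex R) // !mul1r (sumzz_ge Q Zt).
  by rewrite (_ : false%:R = 0 :> complex R) // !mul0r.
have Nn : N != 0 by rewrite gt_eqF.
have Kn : (2 : complex R) ^+ k != 0 by rewrite gt_eqF.
split; rewrite -subr_ge0.
  have -> : (2 ^+ w.+1)^-1 * (2 ^+ w.+1 + (A - N)) -
            (1 - (2 ^+ k)^-1 * (1 - (N^-1 * P) ^+ 2)) =
            (2 ^+ k * N)^-1 * (A - P ^+ 2 / N).
    by rewrite De; field; rewrite Nn Kn.
  rewrite mulr_ge0 //; first by rewrite invr_ge0 ltW // mulr_gt0.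
  by rewrite subr_ge0.
have -> : 1 - (2 ^+ k)^-1 * (1 - N^-1 * P) -
          (2 ^+ w.+1)^-1 * (2 ^+ w.+1 + (A - N)) =
          (2 ^+ k * N)^-1 * (P - A).
  by rewrite De; field; rewrite Nn Kn.
rewrite mulr_ge0 //; first by rewrite invr_ge0 ltW // mulr_gt0.
  by rewrite subr_ge0.
Qed.
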